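(* Let $p$ be an odd prime. For all $n\ge1$, the quotient $A_n/\Phi_nA$ is a rational vector space (i.e. it is divisible and torsion-free as an abelian group).
   Context: $A$ is the ring of degree zero stable operations in $p$-local complex $K$-theory. Fix $q$ primitive mod $p^2$, $\Psi^q\in A$ the Adams operation, $q_i=q^{(-1)^i\lfloor i/2\rfloor}$, $\Theta_n(X)=\prod_{i=1}^n(X-q_i)$, $\Phi_n=\Theta_n(\Psi^q)$; every element of $A$ is uniquely a convergent sum $\sum_{n\ge0}a_n\Phi_n$ with $a_n\in\mathbb{Z}_{(p)}$, and $A_m=\{\sum_{n\ge m}a_n\Phi_n:a_n\in\mathbb{Z}_{(p)}\}$, an ideal of $A$ containing $\Phi_mA$. *)

(* Defs.v *)
From HB Require Import structures.
From mathcomp Require Import all_boot all_order all_algebra.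
Set Implicit Arguments. Unset Strict Implicit. Unset Printing Implicit Defensive.
Import Order.TTheory GRing.Theory Num.Theory.
Local Open Scope ring_scope.

(* Z_(p) as the subring of rat of fractions whose reduced denominator is prime to p *)
Definition Zploc (p : nat) (x : rat) : bool := coprime p `|denq x|%N.

Definition primitive_mod (q : int) (m : nat) : Prop :=
  coprimez q (Posz m) /\
  forall k : nat, (0 < k < totient m)%N -> ((q ^+ k)%R != 1 %[mod Posz m])%Z.

Definition qi (q : int) (i : nat) : rat :=
  (q%:~R : rat) ^ ((-1) ^+ i * Posz (i./2))%R.

Definition Theta (q : int) (n : nat) : {poly rat} :=
  \prod_(1 <= i < n.+1) ('X - (qi q i)%:P).

(* An element of A is the convergent sum sum_n a_n Phi_n, encoded by its
   coefficient sequence a with a_n in Z_(p). *)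
Definition inA (p : nat) (a : nat -> rat) : Prop := forall k, Zploc p (a k).

(* Image of sum_k a_k Phi_k in A/A_m = Z_(p)[X]/(Theta_m), Psi^q |-> X,
   as the reduced representative sum_{k<m} a_k Theta_k (degree < m). *)
Definition trunc (q : int) (a : nat -> rat) (m : nat) : {poly rat} :=
  \sum_(k < m) a k *: Theta q k.

(* A_n = { sum_{k >= n} a_k Phi_k } *)
Definition inAn (p : nat) (n : nat) (a : nat -> rat) : Prop :=
  inA p a /\ forall k, (k < n)%N -> a k = 0.

(* a lies in Phi_n A : a = Phi_n * b for some b in A; the product is determined
   by its images in every quotient A/A_m = Z_(p)[X]/(Theta_m). *)
Definition inPhiA (p : nat) (q : int) (n : nat) (a : nat -> rat) : Prop :=
  exists b, inA p b /\
    forall m, trunc q a m = (Theta q n * trunc q b m) %% Theta q m.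

(* Main.v *)
From HB Require Import structures.
Require Import Defs.
From mathcomp Require Import all_boot all_order all_algebra all_field.
From mathcomp Require Import ring zify.
Set Implicit Arguments. Unset Strict Implicit. Unset Printing Implicit Defensive.
Import Order.TTheory GRing.Theory Num.Theory.
Local Open Scope ring_scope.
Module G.
Import Pdiv.Ring Pdiv.RingMonic.
Section Gen.
Variable T : comNzRingType.
Variable qs : nat -> T.

Definition theta (k : nat) : {poly T} := \prod_(1 <= i < k.+1) ('X - (qs i)%:P).
Definition psi (a k : nat) : {poly T} := \prod_(a.+1 <= i < k.+1) ('X - (qs i)%:P).
Definition tr (x : nat -> T) (m : nat) : {poly T} := \sum_(k < m) x k *: theta k.

Lemma theta0 : theta 0 = 1.
Proof. by rewrite /theta big_geq. Qed.

Lemma thetaS k : theta k.+1 = theta k * ('X - (qs k.+1)%:P).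
Proof. by rewrite /theta big_nat_recr. Qed.

Lemma theta_monic k : theta k \is monic.
Proof.
elim: k => [|k IH]; first by rewrite theta0 monic1.
by rewrite thetaS monicMr ?monicXsubC.
Qed.

Lemma size_theta k : size (theta k) = k.+1.
Proof.
elim: k => [|k IH]; first by rewrite theta0 size_poly1.
by rewrite thetaS size_Mmonic ?monicXsubC ?monic_neq0 ?theta_monic // IH size_XsubC addn2.
Qed.

Lemma psi_split a b k : (a <= b)%N -> (b <= k)%N -> psi a k = psi a b * psi b k.
Proof. by move=> ab bk; rewrite /psi -big_cat_nat. Qed.

Lemma theta_split a k : (a <= k)%N -> theta k = theta a * psi a k.
Proof. by move=> ak; rewrite /theta /psi -big_cat_nat. Qed.

Lemma psi_monic a k : psi a k \is monic.
Proof. by apply: monic_prod => i _; apply: monicXsubC. Qed.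

Lemma size_tr x m : (size (tr x m) <= m)%N.
Proof.
rewrite /tr; apply: (leq_trans (size_sum _ _ _)).
apply/bigmax_leqP => k _.
by apply: (leq_trans (size_scale_leq _ _)); rewrite size_theta.
Qed.

Lemma trS x m : tr x m.+1 = tr x m + x m *: theta m.
Proof. by rewrite /tr big_ord_recr. Qed.

Lemma tr_coef x k : (tr x k.+1)`_k = x k.
Proof.
rewrite trS coefD coefZ.
have -> : (tr x k)`_k = 0 by apply/(leq_sizeP _ _ (size_tr x k)).
have := theta_monic k; move/monicP; rewrite /lead_coef size_theta /= => ->.
by rewrite add0r mulr1.
Qed.

Definition Sf (x : nat -> T) (n j : nat) : {poly T} := \sum_(k < j) x k *: psi n k.

Lemma tr_low x n j : (forall k, (k < n)%N -> x k = 0) -> tr x j = theta n * Sf x n j.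
Proof.
move=> h; rewrite /tr /Sf mulr_sumr; apply: eq_bigr => k _.
case: (ltnP k n) => kn; first by rewrite h // !scale0r mulr0.
by rewrite (theta_split kn) scalerAr.
Qed.

Lemma rmodp_addmul P G k : rmodp (P + G * theta k) (theta k) = rmodp P (theta k).
Proof. by rewrite rmodpD ?theta_monic // rmodp_mull ?theta_monic // addr0. Qed.

Lemma rmodp_rmodp P a k : (a <= k)%N ->
  rmodp (rmodp P (theta k)) (theta a) = rmodp P (theta a).
Proof.
move=> ak.
rewrite [in RHS](rdivp_eq (theta_monic k) P).
set D := rdivp P (theta k); set Q := rmodp P (theta k).
by rewrite (theta_split ak) addrC mulrCA mulrC rmodp_addmul.
Qed.


Lemma psi_nil a : psi a a = 1.
Proof. by rewrite /psi big_geq. Qed.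

Lemma psiS a k : (a <= k)%N -> psi a k.+1 = psi a k * ('X - (qs k.+1)%:P).
Proof. by move=> ak; rewrite /psi big_nat_recr. Qed.

Lemma psi_first a k : (a < k)%N -> psi a k = ('X - (qs a.+1)%:P) * psi a.+1 k.
Proof. by move=> ak; rewrite /psi big_ltn. Qed.

Lemma Sf_eval x a m : (a < m)%N -> (forall k, (k < a)%N -> x k = 0) ->
  (Sf x a m).[qs a.+1] = x a.
Proof.
move=> am hx; rewrite /Sf horner_sum (bigD1 (Ordinal am)) //= psi_nil hornerZ hornerC mulr1.
rewrite big1 ?addr0 // => i ne; rewrite hornerZ.
case: (ltngtP i a) => [ia|ai|ia].
- by rewrite hx // mul0r.
- by rewrite psi_first // hornerM hornerXsubC subrr mul0r mulr0.
- by move: ne; rewrite -(inj_eq val_inj) /= ia eqxx.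
Qed.

Lemma tr_lin c x y m : tr (fun i => c * x i + y i) m = c *: tr x m + tr y m.
Proof.
rewrite /tr scaler_sumr -big_split /=; apply: eq_bigr => i _.
by rewrite scalerDl scalerA.
Qed.

Lemma eq_tr x y m : x =1 y -> tr x m = tr y m.
Proof. by move=> e; apply: eq_bigr => i _; rewrite e. Qed.

Lemma tr0 m : tr (fun _ => 0) m = 0.
Proof. by rewrite /tr big1 // => i _; rewrite scale0r. Qed.

Lemma SfS x n j : Sf x n j.+1 = Sf x n j + x j *: psi n j.
Proof. by rewrite /Sf big_ord_recr. Qed.

Lemma tr_ext x m M : (m <= M)%N -> exists G, tr x M = tr x m + G * theta m.
Proof.
elim: M => [|M IH].
  by rewrite leqn0 => /eqP ->; exists 0; rewrite mul0r addr0.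
rewrite leq_eqVlt => /orP [/eqP ->|]; first by exists 0; rewrite mul0r addr0.
rewrite ltnS => mM; have [G hG] := IH mM; exists (G + x M *: psi m M).
rewrite trS hG (theta_split mM) mulrDl -addrA -scalerAl.
by rewrite [psi m M * _]mulrC scalerAl.
Qed.

Lemma rmodp_tr x m M : (m <= M)%N -> rmodp (tr x M) (theta m) = tr x m.
Proof.
move=> mM; have [G ->] := tr_ext x mM.
rewrite rmodp_addmul rmodp_small // size_theta ltnS; exact: size_tr.
Qed.

Lemma psi_shift a m : (forall i, qs (i + a) = qs i) -> psi a (a + m) = theta m.
Proof.
move=> h; rewrite /psi -{1}[a.+1]add1n big_addn.
have -> : ((a + m).+1 - a = m.+1)%N by rewrite -addnS addKn.
by apply: eq_bigr => i _; rewrite h.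
Qed.

Section Rec.
Variable P : nat -> {poly T}.
Hypothesis compat : forall m, exists G, P m.+1 = P m + G * theta m.

Definition recx (k : nat) : T := (rmodp (P k.+1) (theta k.+1))`_k.

Lemma recxE m : tr recx m = rmodp (P m) (theta m).
Proof.
elim: m => [|m IH].
  by rewrite /tr big_ord0 theta0 rmodp1.
set Q := rmodp (P m.+1) (theta m.+1).
have sQ : (size Q <= m.+1)%N.
  by rewrite -ltnS -(size_theta m.+1) ltn_rmodp monic_neq0 ?theta_monic.
set Z := Q - Q`_m *: theta m.
have sZ : (size Z <= m)%N.
  apply/leq_sizeP => j hj; rewrite /Z coefB coefZ.
  case: (ltngtP j m) => [|jm|<-]; first by rewrite ltnNge hj.
    have -> : Q`_j = 0 by apply/(leq_sizeP _ _ sQ).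
    have -> : (theta m)`_j = 0 by apply: (elimT (leq_sizeP _ _)) jm; rewrite size_theta.
    by rewrite mulr0 subr0.
  have := theta_monic j; move/monicP; rewrite /lead_coef size_theta /= => ->.
  by rewrite mulr1 subrr.
have e1 : rmodp Z (theta m) = Z by rewrite rmodp_small // size_theta ltnS.
have e2 : rmodp Z (theta m) = tr recx m.
  rewrite /Z -scaleNr -mul_polyC rmodp_addmul IH /Q rmodp_rmodp //.
  by have [G ->] := compat m; rewrite rmodp_addmul.
have -> : Q = Z + Q`_m *: theta m by rewrite /Z subrK.
by rewrite trS -e2 e1.
Qed.
End Rec.

Definition mulseq n b := recx (fun m => theta n * tr b m).

Lemma mulseqE n b m : tr (mulseq n b) m = rmodp (theta n * tr b m) (theta m).
Proof.
apply: recxE => k; exists (b k *: theta n).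
by rewrite trS mulrDr -scalerAr scalerAl.
Qed.

Lemma mulseq_low n b k : (k < n)%N -> mulseq n b k = 0.
Proof.
move=> kn; rewrite /mulseq /recx (theta_split kn) -mulrA mulrC.
by rewrite rmodp_mull ?theta_monic // coef0.
Qed.

Lemma mulseq_lin n c b1 b2 k :
  mulseq n (fun i => c * b1 i + b2 i) k = c * mulseq n b1 k + mulseq n b2 k.
Proof.
rewrite /mulseq /recx tr_lin mulrDr rmodpD ?theta_monic // -scalerAr.
by rewrite rmodpZ ?theta_monic // coefD coefZ.
Qed.


Lemma eq_mulseq n b1 b2 k : b1 =1 b2 -> mulseq n b1 k = mulseq n b2 k.
Proof. by move=> e; rewrite /mulseq /recx (eq_tr _ e). Qed.

Lemma mulseq0 n k : mulseq n (fun _ => 0) k = 0.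
Proof. by rewrite /mulseq /recx tr0 mulr0 rmod0p coef0. Qed.

Lemma mulseqZ n c b k : mulseq n (fun i => c * b i) k = c * mulseq n b k.
Proof.
rewrite -[RHS]addr0 -(mulseq0 n k) -mulseq_lin.
by apply: eq_mulseq => i; rewrite addr0.
Qed.

End Gen.

Section Map.
Variables (T T' : comNzRingType) (f : {rmorphism T -> T'}) (qs : nat -> T).

Lemma size_map_leq (P : {poly T}) : (size (map_poly f P) <= size P)%N.
Proof.
apply/leq_sizeP => j hj; rewrite coef_map.
have -> : P`_j = 0 by apply: (elimT (leq_sizeP _ _)) hj.
exact: raddf0.
Qed.

Lemma map_theta k : map_poly f (theta qs k) = theta (f \o qs) k.
Proof. by rewrite /theta rmorph_prod; apply: eq_bigr => i _; rewrite /= map_polyXsubC. Qed.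

Lemma map_tr x m : map_poly f (tr qs x m) = tr (f \o qs) (f \o x) m.
Proof.
rewrite /tr rmorph_sum; apply: eq_bigr => i _.
by rewrite /= map_polyZ map_theta.
Qed.

Lemma map_rmodp P k : map_poly f (rmodp P (theta qs k)) =
   rmodp (map_poly f P) (theta (f \o qs) k).
Proof.
rewrite {2}(rdivp_eq (theta_monic qs k) P) rmorphD rmorphM /= map_theta.
rewrite rmodp_addl_mul_small ?theta_monic //.
apply: (leq_ltn_trans (size_map_leq _)).
by rewrite size_theta -(size_theta qs k) ltn_rmodp monic_neq0 ?theta_monic.
Qed.
End Map.

End G.
Lemma denq_dvd (x : rat) (u v : int) : v != 0 -> x = u%:~R / v%:~R ->
  (`|denq x| %| `|v|)%N.
Proof.
move=> v0 xE.
have h : numq x * v = u * denq x.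
  apply: (@intr_inj rat); rewrite !rmorphM /= numqE xE.
  have v0' : (v%:~R : rat) != 0 by rewrite intr_eq0.
  by field.
have : (`|denq x| %| `|numq x| * `|v|)%N.
  by rewrite -abszM h abszM dvdn_mull.
by rewrite Gauss_dvdr // coprime_sym coprime_num_den.
Qed.

Section Loc.
Variable p : nat.

Lemma Zploc_cop (x : rat) (u v : int) : v != 0 -> x = u%:~R / v%:~R ->
  coprime p `|v| -> Zploc p x.
Proof. by move=> v0 xE c; apply: coprime_dvdr (denq_dvd v0 xE) c. Qed.

Lemma Zploc1 : Zploc p 1.
Proof. by rewrite /Zploc coprimen1. Qed.

Lemma ZplocB x y : Zploc p x -> Zploc p y -> Zploc p (x - y).
Proof.
rewrite /Zploc => hx hy.
apply: (@Zploc_cop _ (numq x * denq y - numq y * denq x) (denq x * denq y)).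
- by rewrite mulf_neq0 ?denq_neq0.
- rewrite -[x in LHS]divq_num_den -[y in LHS]divq_num_den.
  have dx : ((denq x)%:~R : rat) != 0 by rewrite intr_eq0 denq_neq0.
  have dy : ((denq y)%:~R : rat) != 0 by rewrite intr_eq0 denq_neq0.
  rewrite !rmorphB !rmorphM /=. by field; apply/andP; split.
- by rewrite abszM coprimeMr; apply/andP; split.
Qed.

Lemma ZplocM x y : Zploc p x -> Zploc p y -> Zploc p (x * y).
Proof.
rewrite /Zploc => hx hy.
apply: (@Zploc_cop _ (numq x * numq y) (denq x * denq y)).
- by rewrite mulf_neq0 ?denq_neq0.
- rewrite -[x in LHS]divq_num_den -[y in LHS]divq_num_den.
  have dx : ((denq x)%:~R : rat) != 0 by rewrite intr_eq0 denq_neq0.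
  have dy : ((denq y)%:~R : rat) != 0 by rewrite intr_eq0 denq_neq0.
  rewrite !rmorphM /=. by field; apply/andP; split.
- by rewrite abszM coprimeMr; apply/andP; split.
Qed.

Definition ZpQ (x : rat) : bool := Zploc p x.

Fact ZpQ_subring : subring_closed ZpQ.
Proof.
split; rewrite /in_mem /= /ZpQ.
- exact: Zploc1.
- by move=> x y; apply: ZplocB.
- by move=> x y; apply: ZplocM.
Qed.

HB.instance Definition _ := GRing.isSubringClosed.Build rat ZpQ ZpQ_subring.

Record Rp := MkRp { rval :> rat; rvalP : ZpQ rval }.
HB.instance Definition _ := [isSub for rval].
HB.instance Definition _ := [Choice of Rp by <:].
HB.instance Definition _ := [SubChoice_isSubComNzRing of Rp by <:].

End Loc.

Lemma cross (x : rat) (u v : int) : v != 0 -> x = u%:~R / v%:~R ->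
  numq x * v = u * denq x.
Proof.
move=> v0 xE.
apply: (@intr_inj rat); rewrite !rmorphM /= numqE xE.
have v0' : (v%:~R : rat) != 0 by rewrite intr_eq0.
by field.
Qed.

Import Pdiv.Ring.

Section Red.
Variable p : nat.
Hypothesis pp : prime p.
Local Notation R := (Rp p).

Lemma Fp_int0 (z : int) : ((z%:~R : 'F_p) == 0) = (p %| `|z|)%N.
Proof. by rewrite -(dvdz_pcharf (pchar_Fp pp)). Qed.

Lemma Fp_cop (z : int) : coprime p `|z| -> (z%:~R : 'F_p) != 0.
Proof. by rewrite Fp_int0 -prime_coprime. Qed.

Definition redq (x : rat) : 'F_p := (numq x)%:~R / (denq x)%:~R.

Lemma redqE (x : rat) (u v : int) : Zploc p x -> coprime p `|v| ->
  x = u%:~R / v%:~R -> redq x = u%:~R / v%:~R.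
Proof.
move=> hx hv xE.
have v0 : v != 0 by apply: contraTneq hv => ->; rewrite /coprime gcdn0; apply/eqP => e; move: (prime_gt1 pp); rewrite e.
have h := cross v0 xE.
rewrite /redq; apply/eqP; rewrite eqr_div ?Fp_cop //.
by rewrite -!rmorphM /= h.
Qed.

Definition red (x : R) : 'F_p := redq (val x).

Lemma redB : {morph red : x y / x - y}.
Proof.
move=> x y; rewrite /red rmorphB /=.
have hx : Zploc p (val x) := rvalP x; have hy : Zploc p (val y) := rvalP y.
rewrite (@redqE _ (numq (val x) * denq (val y) - numq (val y) * denq (val x))
                (denq (val x) * denq (val y))).
- have dx := Fp_cop hx; have dy := Fp_cop hy.
  rewrite /redq !rmorphB !rmorphM /=. by field; apply/andP; split.
- by apply: ZplocB.
- by rewrite abszM coprimeMr; apply/andP; split.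
- rewrite -[val x in LHS]divq_num_den -[val y in LHS]divq_num_den.
  have dx : ((denq (val x))%:~R : rat) != 0 by rewrite intr_eq0 denq_neq0.
  have dy : ((denq (val y))%:~R : rat) != 0 by rewrite intr_eq0 denq_neq0.
  rewrite !rmorphB !rmorphM /=. by field; apply/andP; split.
Qed.

Lemma redM : {morph red : x y / x * y}.
Proof.
move=> x y; rewrite /red rmorphM /=.
have hx : Zploc p (val x) := rvalP x; have hy : Zploc p (val y) := rvalP y.
rewrite (@redqE _ (numq (val x) * numq (val y)) (denq (val x) * denq (val y))).
- have dx := Fp_cop hx; have dy := Fp_cop hy.
  rewrite /redq !rmorphM /=. by field; apply/andP; split.
- by apply: ZplocM.
- by rewrite abszM coprimeMr; apply/andP; split.
- rewrite -[val x in LHS]divq_num_den -[val y in LHS]divq_num_den.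
  have dx : ((denq (val x))%:~R : rat) != 0 by rewrite intr_eq0 denq_neq0.
  have dy : ((denq (val y))%:~R : rat) != 0 by rewrite intr_eq0 denq_neq0.
  rewrite !rmorphM /=. by field; apply/andP; split.
Qed.

Lemma red1 : red 1 = 1.
Proof. by rewrite /red /redq rmorph1 /= divr1. Qed.

HB.instance Definition _ := GRing.isZmodMorphism.Build R 'F_p red redB.
HB.instance Definition _ := GRing.isMonoidMorphism.Build R 'F_p red (red1, redM).


Lemma red_p : red (p%:R) = 0.
Proof. by rewrite rmorph_nat pchar_Fp_0. Qed.

Lemma red_lift (z : 'F_p) : red ((z : nat)%:R) = z.
Proof. by rewrite rmorph_nat natr_Zp. Qed.

Lemma red0 (x : R) : red x = 0 -> exists y : R, x = p%:R * y.
Proof.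
move=> h.
have hx : Zploc p (val x) := rvalP x.
have : ((numq (val x))%:~R : 'F_p) == 0.
  move: h; rewrite /red /redq => /eqP; rewrite mulf_eq0 invr_eq0.
  by rewrite (negPf (Fp_cop hx)) orbF.
rewrite Fp_int0 => /dvdnP [k hk].
have hN : numq (val x) = (sgz (numq (val x)) * k%:Z) * p%:Z.
  by rewrite {1}[numq _]intEsg hk PoszM mulrA.
move: hN; set s := sgz (numq (val x)) => hN.
have hy : Zploc p (val x / p%:R).
  apply: (@Zploc_cop p _ (s * k%:Z) (denq (val x))).
  - exact: denq_neq0.
  - rewrite -[val x in LHS]divq_num_den hN.
    have dx : ((denq (val x))%:~R : rat) != 0 by rewrite intr_eq0 denq_neq0.
    have p0 : (p%:R : rat) != 0 by rewrite pnatr_eq0 -lt0n prime_gt0.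
    have e : ((Posz p)%:~R : rat) = p%:R by [].
    rewrite !rmorphM /= e.
    by field; apply/andP; split.
  - exact: hx.
exists (MkRp (hy : ZpQ p _)); apply: val_inj => /=.
have p0 : (p%:R : rat) != 0 by rewrite pnatr_eq0 -lt0n prime_gt0.
have -> : rval (p%:R : R) = p%:R by rewrite -[rval _]/(val _) rmorph_nat.
by rewrite mulrCA divff ?mulr1.
Qed.


Section Q.
Variable q : int.
Hypothesis qc : coprimez q (Posz (p ^ 2)).

Lemma cop_q : coprime p `|q|.
Proof. by move: qc; rewrite coprimezE /= coprime_pexpr // coprime_sym. Qed.

Lemma q_neq0 : q != 0.
Proof.
apply: contraTneq cop_q => ->; rewrite /coprime /= gcdn0.
by apply/eqP => e; move: (prime_gt1 pp); rewrite e.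
Qed.

Definition qR1 : R := q%:~R.

Lemma Zq_inv : Zploc p (q%:~R : rat)^-1.
Proof. by rewrite /Zploc denqVz ?q_neq0 //; exact: cop_q. Qed.

Definition qinvR : R := MkRp (Zq_inv : ZpQ p _).

Definition qR (i : nat) : R := if odd i then qinvR ^+ i./2 else qR1 ^+ i./2.

Lemma val_qR1 : rval qR1 = q%:~R.
Proof. by rewrite /qR1 -[rval _]/(val _) rmorph_int. Qed.

Lemma val_qR i : val (qR i) = qi q i.
Proof.
rewrite /qR /qi -signr_odd; case: (odd i).
  rewrite rmorphXn /= expr1 mulN1r -exprz_inv. by [].
by rewrite rmorphXn /= val_qR1 expr0 mul1r.
Qed.

Lemma qq1 : qR1 * qinvR = 1.
Proof.
apply: val_inj; rewrite rmorphM rmorph1 /= val_qR1 /= divff //.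
by rewrite intr_eq0 q_neq0.
Qed.

Lemma ferm (x : 'F_p) : x != 0 -> x ^+ p.-1 = 1.
Proof.
move=> x0; have := expf_card x; rewrite card_Fp //.
move=> h; have : x ^+ (p.-1).+1 = x by rewrite prednK ?prime_gt0.
rewrite exprS => h2; apply: (mulfI x0); by rewrite mulr1.
Qed.

Lemma red_per i : red (qR (i + (p.-1).*2)) = red (qR i).
Proof.
have oP : odd (p.-1).*2 = false by rewrite odd_double.
have hP : (i + (p.-1).*2)./2 = (i./2 + p.-1)%N.
  by rewrite halfD oP andbF add0n doubleK.
have h1 : red qR1 * red qinvR = 1 by rewrite -rmorphM qq1 rmorph1.
have n1 : red qR1 != 0 by apply: contra_eq_neq h1 => ->; rewrite mul0r eq_sym oner_neq0.
have n2 : red qinvR != 0 by apply: contra_eq_neq h1 => ->; rewrite mulr0 eq_sym oner_neq0.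
rewrite /qR oddD oP addbF hP; case: (odd i);
  by rewrite exprD rmorphM !rmorphXn /= ferm // mulr1.
Qed.

Lemma red_per_t i t : red (qR (i + (p.-1).*2 * t)) = red (qR i).
Proof.
elim: t => [|t IH]; first by rewrite muln0 addn0.
by rewrite mulnS addnCA addnC red_per IH.
Qed.

Local Notation qb := (red \o qR).
Local Notation P := ((p.-1).*2).

Lemma P_gt0 : (0 < P)%N.
Proof. by rewrite double_gt0 -ltnS prednK ?prime_gt1 ?prime_gt0. Qed.

Lemma map_mulseq n b m :
  rmodp (G.theta qb n * G.tr qb (red \o b) m) (G.theta qb m) =
  G.tr qb (red \o G.mulseq qR n b) m.
Proof.
by rewrite -[RHS](G.map_tr red qR) G.mulseqE G.map_rmodp rmorphM /= G.map_theta G.map_tr.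
Qed.

Lemma pow_dvd k0 t :
  ('X - (qb k0.+1)%:P) ^+ t.+1 %| G.theta qb (k0.+1 + P * t).
Proof.
elim: t => [|t IH].
  by rewrite muln0 addn0 expr1 G.thetaS dvdp_mulIr.
set j := (k0.+1 + P * t)%N.
have jj : (k0.+1 + P * t.+1 = (j + P.-1).+1)%N.
  by rewrite /j mulnS; have := P_gt0; lia.
have h2 : (j <= j + P.-1)%N by rewrite leq_addr.
have h1 : (j <= (j + P.-1).+1)%N by rewrite leqW.
rewrite jj (G.theta_split qb h1) (G.psiS qb h2) -jj.
have -> : qb (k0.+1 + P * t.+1) = qb k0.+1 by rewrite /= red_per_t.
by rewrite exprSr mulrA dvdp_mul // dvdp_mulr.
Qed.

Lemma KL n (b : nat -> R) :
  (forall k, red (G.mulseq qR n b k) = 0) -> forall k, red (b k) = 0.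
Proof.
move=> h.
suff : ~ exists k, red (b k) != 0.
  by move=> H k; apply/eqP/negPn/negP => hk; apply: H; exists k.
move=> ex; case: (ex_minnP ex) => k0 hk0 hmin.
have low : forall k, (k < k0)%N -> (red \o b) k = 0.
  move=> k kk; apply/eqP/negPn/negP => hk.
  by move: (hmin k hk); rewrite leqNgt kk.
set m := (k0.+1 + P * (n + k0))%N.
have km : (k0 < m)%N by rewrite /m ltnS leq_addr.
set U := G.Sf qb (red \o b) k0 m.
have Ur : U.[qb k0.+1] = red (b k0) by rewrite /U (G.Sf_eval qb km low).
have U0 : U != 0 by apply: contra_neq hk0 => U0; rewrite -Ur U0 horner0.
have hdiv : G.theta qb m %| G.theta qb n * (G.theta qb k0 * U).
  have e := map_mulseq n b m.
  have z : G.tr qb (red \o G.mulseq qR n b) m = 0.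
    by rewrite -(G.tr0 qb m); apply: G.eq_tr => i /=; rewrite h.
  rewrite z in e; rewrite /U -(G.tr_low qb m low).
  rewrite (Pdiv.RingMonic.rdivp_eq (G.theta_monic qb m) (G.theta qb n * G.tr qb (red \o b) m)) e addr0.
  exact: dvdp_mulIr.
set r := qb k0.+1.
have hpow := pow_dvd k0 (n + k0); rewrite -/m -/r in hpow.
have tn0 : forall k, G.theta qb k != 0 by move=> k; apply: monic_neq0; apply: G.theta_monic.
set Q1 := G.theta qb n * G.theta qb k0.
have Q10 : Q1 != 0 by rewrite mulf_neq0.
have Q0 : Q1 * U != 0 by rewrite mulf_neq0.
have := mup_geq r (n + k0).+1 Q0.
rewrite /Q1 -mulrA (dvdp_trans hpow hdiv) mulrA -/Q1 mupMl; last first.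
  by rewrite /root Ur.
set M := mup r Q1 => hM.
have : ('X - r%:P) ^+ M %| Q1 by rewrite -mup_geq.
move=> /(dvdp_leq Q10); rewrite size_exp_XsubC /Q1 size_Mmonic ?G.theta_monic //.
rewrite !G.size_theta; lia.
Qed.

Lemma DP n (a : nat -> R) : (forall k, (k < n)%N -> a k = 0) ->
  exists b : nat -> R, forall k, red (G.mulseq qR n b k) = red (a k).
Proof.
move=> low.
have lowa : forall k, (k < n)%N -> (red \o a) k = 0 by move=> k kn; rewrite /= low // rmorph0.
pose PP m := G.Sf qb (red \o a) n (m + P * n).
have per : forall i, qb (i + P * n) = qb i by move=> i; rewrite /= red_per_t.
have psiE : forall m, G.psi qb n (m + P * n) = G.psi qb n (P * n) * G.theta qb m.
  move=> m.
  have h1 : (n <= P * n)%N by rewrite leq_pmull ?P_gt0.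
  have h2 : (P * n <= m + P * n)%N by rewrite leq_addl.
  by rewrite (G.psi_split qb h1 h2) addnC G.psi_shift.
have compat : forall m, exists G, PP m.+1 = PP m + G * G.theta qb m.
  move=> m; exists ((red \o a) (m + P * n) *: G.psi qb n (P * n)).
  by rewrite /PP addSn G.SfS psiE scalerAl.
pose bb := G.recx qb PP.
have hbb := G.recxE compat.
exists (fun k => ((bb k : 'F_p) : nat)%:R) => k.
have e1 : red (G.mulseq qR n (fun k => ((bb k : 'F_p) : nat)%:R) k) =
   (map_poly red (G.tr qR (G.mulseq qR n (fun k => ((bb k : 'F_p) : nat)%:R)) k.+1))`_k.
  by rewrite coef_map G.tr_coef.
rewrite e1 G.map_tr -map_mulseq.
have -> : G.tr qb (red \o (fun k => ((bb k : 'F_p) : nat)%:R)) k.+1 = G.tr qb bb k.+1.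
  by apply: G.eq_tr => i /=; rewrite red_lift.
rewrite hbb Pdiv.RingMonic.rmodp_mulmr ?G.theta_monic // /PP -(G.tr_low qb _ lowa).
by rewrite G.rmodp_tr ?leq_addr // G.tr_coef.
Qed.

Lemma p_neq0 : (p%:R : rat) != 0.
Proof. by rewrite pnatr_eq0 -lt0n prime_gt0. Qed.

Lemma val_natR k : rval (k%:R : R) = k%:R.
Proof. by rewrite -[rval _]/(val _) rmorph_nat. Qed.

Lemma valE (x : R) : val x = rval x.
Proof. by []. Qed.

Lemma valM (x y : R) : rval (x * y) = rval x * rval y.
Proof. by rewrite -![rval _]/(val _) rmorphM. Qed.
Lemma valB (x y : R) : rval (x - y) = rval x - rval y.
Proof. by rewrite -![rval _]/(val _) rmorphB. Qed.
Lemma val1 : rval (1 : R) = 1.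
Proof. by rewrite -![rval _]/(val _) rmorph1. Qed.

Lemma p_cancel (x y : R) : p%:R * x = p%:R * y -> x = y.
Proof.
move=> /(congr1 (@rval p)); rewrite !valM val_natR => /(mulfI p_neq0).
exact: val_inj.
Qed.

Definition pd (x : R) : R := insubd 0 (val x / p%:R).

Lemma pdE (x : R) : red x = 0 -> x = p%:R * pd x.
Proof.
move=> /red0 [y hy]; apply: val_inj.
change (rval x = rval (p%:R * pd x)); rewrite valM val_natR /pd insubdK.
  by rewrite mulrCA divff ?mulr1 // p_neq0.
change (Zploc p (rval x / p%:R)); rewrite hy valM val_natR mulrAC divff ?p_neq0 // mul1r.
exact: (rvalP y).
Qed.

Lemma inv_unit m' : coprime p m' -> exists y : R, m'%:R * y = 1.
Proof.
move=> c.
have m0 : m' != 0%N by apply: contraTneq c => ->; rewrite /coprime gcdn0; apply/eqP => e; move: (prime_gt1 pp); rewrite e.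
have hz : Zploc p ((Posz m')%:~R : rat)^-1.
  by rewrite /Zploc denqVz //.
exists (MkRp (hz : ZpQ p _)); apply: val_inj.
rewrite !valE valM val1 val_natR /= divff //.
by rewrite pnatr_eq0.
Qed.

Local Notation mul := (G.mulseq qR).

Lemma TF n (m : nat) (a b : nat -> R) : (0 < m)%N ->
  (forall k, m%:R * a k = mul n b k) -> exists b', forall k, a k = mul n b' k.
Proof.
move=> m0; have [m' cm' ->] := pfactor_coprime pp m0.
have [y hy] := inv_unit cm'.
elim: (logn p m) b => [|e IH] b h.
  exists (fun k => y * b k) => k.
  by rewrite G.mulseqZ -h expn0 muln1 mulrA [y * _]mulrC hy mul1r.
have r0 : forall k, red (mul n b k) = 0.
  by move=> k; rewrite -h expnS mulnCA natrM !rmorphM /= red_p !mul0r.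
have rb := KL r0.
apply: (IH (fun k => pd (b k))) => k; apply: p_cancel.
rewrite -G.mulseqZ (G.eq_mulseq qR n k (fun i => esym (pdE (rb i)))) -h.
by rewrite expnS mulnCA !natrM !mulrA.
Qed.

Lemma DIV n (m : nat) (a : nat -> R) : (0 < m)%N ->
  (forall k, (k < n)%N -> a k = 0) ->
  exists c : nat -> R, (forall k, (k < n)%N -> c k = 0) /\
    exists b, forall k, m%:R * c k - a k = mul n b k.
Proof.
move=> m0 low; have [m' cm' ->] := pfactor_coprime pp m0.
have [y hy] := inv_unit cm'.
suff [c [cl [b hb]]] : exists c : nat -> R, (forall k, (k < n)%N -> c k = 0) /\
    exists b, forall k, (p ^ logn p m)%:R * c k - a k = mul n b k.
  exists (fun k => y * c k); split; first by move=> k kn; rewrite cl // mulr0.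
  exists b => k; rewrite -hb natrM.
  rewrite (_ : m'%:R * _ * (y * c k) = (p ^ logn p m)%:R * (m'%:R * y) * c k); last by ring.
  by rewrite hy mulr1.
elim: (logn p m) a low => [|e IH] a low.
  exists a; split => //; exists (fun _ => 0) => k.
  by rewrite G.mulseq0 expn0 mul1r subrr.
have [b1 hb1] := DP low.
pose d k := a k - mul n b1 k.
have rd : forall k, red (d k) = 0 by move=> k; rewrite /d rmorphB /= hb1 subrr.
pose c1 k := pd (d k).
have c1l : forall k, (k < n)%N -> c1 k = 0.
  move=> k kn; apply: p_cancel; rewrite mulr0 -pdE // /d low // G.mulseq_low //.
  by rewrite subrr.
have [c2 [c2l [b2 hb2]]] := IH c1 c1l.
exists c2; split => //.
exists (fun i => p%:R * b2 i + (- 1) * b1 i) => k.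
rewrite G.mulseq_lin G.mulseqZ -hb2.
have -> : a k = p%:R * c1 k + mul n b1 k by rewrite -pdE // /d subrK.
rewrite expnS natrM; ring.
Qed.

Lemma Theta_eq k : Theta q k = G.theta (val \o qR) k.
Proof. by rewrite /Theta /G.theta; apply: eq_bigr => i _; rewrite /= val_qR. Qed.

Lemma trunc_val (y : nat -> R) m :
  trunc q (fun k => rval (y k)) m = map_poly val (G.tr qR y m).
Proof.
rewrite G.map_tr /trunc /G.tr; apply: eq_bigr => i _.
by rewrite Theta_eq.
Qed.

Lemma key n (b : nat -> R) m :
  (Theta q n * trunc q (fun k => rval (b k)) m) %% Theta q m =
  map_poly val (G.tr qR (mul n b) m).
Proof.
have mon : map_poly val (G.theta qR m) \is monic by rewrite G.map_theta G.theta_monic.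
rewrite trunc_val !Theta_eq -!(G.map_theta val) -rmorphM (Pdiv.IdomainMonic.modpE mon).
by rewrite G.map_theta -G.map_rmodp -G.mulseqE.
Qed.

Lemma trunc_coef (x : nat -> rat) k : (trunc q x k.+1)`_k = x k.
Proof. exact: (G.tr_coef (qi q) x k). Qed.

Lemma trunc_ext (x y : nat -> rat) m : x =1 y -> trunc q x m = trunc q y m.
Proof. by move=> e; apply: eq_bigr => i _; rewrite e. Qed.

Definition lift (a : nat -> rat) : nat -> R := fun k => insubd 0 (a k).

Lemma liftE a : inA p a -> forall k, rval (lift a k) = a k.
Proof. by move=> ha k; rewrite -valE /lift insubdK //; apply: ha. Qed.

Lemma PHI n (x : nat -> rat) :
  inPhiA p q n x <-> exists b : nat -> R, forall k, x k = rval (mul n b k).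
Proof.
split.
  move=> [b [hb h]]; exists (lift b) => k.
  rewrite -trunc_coef h (trunc_ext _ (fun i => esym (liftE hb i))) key.
  by rewrite coef_map G.tr_coef.
move=> [b hb]; exists (fun k => rval (b k)); split.
  by move=> k; exact: (rvalP (b k)).
by move=> m; rewrite key (trunc_ext _ hb) trunc_val.
Qed.

Lemma val0 : rval (0 : R) = 0.
Proof. by rewrite -[rval _]/(val _) rmorph0. Qed.

Lemma main n :
    (forall (a : nat -> rat) (m : nat), (0 < m)%N -> inAn p n a ->
       exists c : nat -> rat, inAn p n c /\
         inPhiA p q n (fun k => m%:R * c k - a k)) /\
    (forall (a : nat -> rat) (m : nat), (0 < m)%N -> inAn p n a ->
       inPhiA p q n (fun k => m%:R * a k) -> inPhiA p q n a).
Proof.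
split.
- move=> a m m0 [ha low].
  have lowl : forall k, (k < n)%N -> lift a k = 0.
    by move=> k kn; apply: val_inj; rewrite !valE liftE // low // val0.
  have [c [cl [b hb]]] := DIV m0 lowl.
  exists (fun k => rval (c k)); split.
    split; first by move=> k; exact: (rvalP (c k)).
    by move=> k kn; rewrite cl // val0.
  apply/PHI; exists b => k.
  by rewrite -hb valB valM val_natR liftE.
- move=> a m m0 [ha _] /PHI [b hb].
  have h : forall k, m%:R * lift a k = mul n b k.
    by move=> k; apply: val_inj; rewrite !valE valM val_natR liftE // hb.
  have [b' hb'] := TF m0 h.
  by apply/PHI; exists b' => k; rewrite -hb' liftE.
Qed.
End Q.
End Red.

Theorem proposition3p3 (p : nat) (q : int) :
  prime p -> odd p -> primitive_mod q (p ^ 2) ->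
  forall n : nat, (1 <= n)%N ->
    (* A_n / Phi_n A is divisible *)
    (forall (a : nat -> rat) (m : nat), (0 < m)%N -> inAn p n a ->
       exists c : nat -> rat, inAn p n c /\
         inPhiA p q n (fun k => m%:R * c k - a k)) /\
    (* A_n / Phi_n A is torsion-free *)
    (forall (a : nat -> rat) (m : nat), (0 < m)%N -> inAn p n a ->
       inPhiA p q n (fun k => m%:R * a k) -> inPhiA p q n a).
Proof.
move=> pp _ [qc _] n _.
exact: (main pp qc n).
Qed.
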